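(* Let $G=(V,E)$ be a strongly connected directed graph with start $s$ and goal $g$, non-negative edge costs $f'_1,\dots,f'_n$, a monotone composition function $\beta$ defining path costs $f_i(P)=\beta(f'_i(e_1),f'_i(e_2),\dots)$, weights $w\in[0,1]^n$ and $\rho>0$. For any weight vector $w$, the Min-Max Cost Path algorithm described below returns an $s$–$g$ path $P^*\in\arg\min_P\left(\max_i w_i f_i(P)+\rho\sum_{i=1}^n f_i(P)\right)$, the minimum being over all paths from $s$ to $g$. Algorithm: initialize an open list containing the tuple $(0,s,(s))$. While the open list is nonempty: remove a tuple $(\mathit{cost},v,P)$ of minimum cost; if $v=g$, return $P$. Otherwise, for each neighbour $u$ of $v$: form $P^u=P$ extended by $u$; let $\mathcal P$ be the set of paths in the open list ending at $u$; if some $P'\in\mathcal P$ dominates $P^u$ or $P^u$ contains a cycle, skip $u$; otherwise delete from the open list all tuples whose path $P'$ ends at $u$ and is dominated by $P^u$, compute $c^{\max}(P^u)=\max_i w_i f_i(P^u)+\rho\sum_i f_i(P^u)$, and add $(c^{\max}(P^u),u,P^u)$ to the open list. If the open list becomes empty, return failure.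
   Context: A path is a sequence of distinct vertices consecutive pairs of which are edges of $G$. A path $P'$ dominates $P$ if $f_i(P')\le f_i(P)$ for all $i$ with strict inequality for some $i$. Monotonicity of $\beta$: extending a path never decreases any $f_i$, and whenever $f_i(P')\le f_i(P)$ for two paths ending at the same vertex $u$, then $f_i(P'\cup Q)\le f_i(P\cup Q)$ for every continuation $Q$ starting at $u$. *)

(* Defs.v *)
From HB Require Import structures.
From mathcomp Require Import all_boot all_order all_algebra.
From Stdlib Require Import Relations.
Set Implicit Arguments. Unset Strict Implicit. Unset Printing Implicit Defensive.
Import Order.TTheory GRing.Theory Num.Theory.
Local Open Scope ring_scope.

Section MinMaxCostPath.
Variables (R : realFieldType) (V : finType) (E : rel V) (n : nat)
  (fe : 'I_n -> V -> V -> R) (beta : seq R -> R)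
  (w : 'I_n -> R) (rho : R) (s g : V).

Definition walk (p : seq V) : bool :=
  if p is x :: t then path E x t else false.

Definition is_path (p : seq V) : bool := walk p && uniq p.

Definition sg_path (p : seq V) : bool :=
  [&& is_path p, head s p == s & last s p == g].

Definition edges (p : seq V) : seq (V * V) := zip p (behead p).

Definition fcost (i : 'I_n) (p : seq V) : R :=
  beta [seq fe i e.1 e.2 | e <- edges p].

Definition dominates (p' p : seq V) : bool :=
  [forall i, fcost i p' <= fcost i p] && [exists i, fcost i p' < fcost i p].

(* max over i of w_i f_i(P) (the bigop default is one of the terms, so for
   n > 0 this is exactly the maximum) *)
Definition maxw (p : seq V) : R :=
  \big[Num.max/head 0 [seq w i * fcost i p | i <- enum 'I_n]]_(i < n)
     (w i * fcost i p).

Definition cmax (p : seq V) : R := maxw p + rho * \sum_(i < n) fcost i p.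

Definition tuple_t := (R * V * seq V)%type.

Inductive state :=
| Open of seq tuple_t
| Ret of seq V
| Fail.

Definition relax (L : seq tuple_t) (P : seq V) (u : V) : seq tuple_t :=
  let Pu := rcons P u in
  if has (fun t => (last s t.2 == u) && dominates t.2 Pu) L || ~~ uniq Pu
  then L
  else rcons [seq t <- L | ~~ ((last s t.2 == u) && dominates Pu t.2)]
             (cmax Pu, u, Pu).

(* one iteration of the while loop; nondeterministic in the choice of the
   minimum-cost tuple and in the order neighbours are processed *)
Inductive step : state -> state -> Prop :=
| step_empty : step (Open [::]) Fail
| step_goal (L : seq tuple_t) (c : R) (v : V) (P : seq V) :
    (c, v, P) \in L -> (forall t, t \in L -> c <= t.1.1) -> v = g ->
    step (Open L) (Ret P)
| step_expand (L : seq tuple_t) (c : R) (v : V) (P : seq V) (ns : seq V) :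
    (c, v, P) \in L -> (forall t, t \in L -> c <= t.1.1) -> v <> g ->
    perm_eq ns [seq u <- enum V | E v u] ->
    step (Open L) (Open (foldl (fun L' u => relax L' P u) (rem (c, v, P) L) ns)).

Definition init_state : state := Open [:: (0, s, [:: s])].

End MinMaxCostPath.

(* Main.v *)
Set Warnings "-notation-overridden,-ambiguous-paths".
Require Import Defs.
From HB Require Import structures.
From mathcomp Require Import all_boot all_order all_algebra.
From Stdlib Require Import Relations.
From mathcomp Require Import zify.
From Stdlib Require Import Lia.
Import Order.TTheory GRing.Theory Num.Theory.
Local Open Scope ring_scope.

Section Aux.
Variables (R : realFieldType) (V : finType) (E : rel V) (n : nat)
  (fe : 'I_n -> V -> V -> R) (beta : seq R -> R)
  (w : 'I_n -> R) (rho : R) (s g : V).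
Hypothesis hmono : forall (i : 'I_n) (p q : seq V), is_path E p -> walk E (p ++ q) ->
     fcost fe beta i p <= fcost fe beta i (p ++ q).
Hypothesis hdom : forall (i : 'I_n) (p p' q : seq V), is_path E p -> is_path E p' ->
     last s p = last s p' -> walk E (p ++ q) -> walk E (p' ++ q) ->
     fcost fe beta i p' <= fcost fe beta i p ->
     fcost fe beta i (p' ++ q) <= fcost fe beta i (p ++ q).
Hypothesis hn : (0 < n)%N.
Hypothesis hw : forall i : 'I_n, 0 <= w i <= 1.
Hypothesis hrho : 0 < rho.

Local Notation f := (fcost fe beta).
Local Notation cm := (cmax fe beta w rho).

Definition le_f (p : seq V) (F : 'I_n -> R) := forall i, f i p <= F i.

Lemma big_max_ge (F : 'I_n -> R) x (r : seq 'I_n) j :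
  j \in r -> F j <= \big[Num.max/x]_(i <- r) F i.
Proof.
elim: r => [//|a r IH]; rewrite in_cons big_cons le_max.
case/orP=> [/eqP -> | /IH ->]; last by rewrite orbT.
by rewrite lexx.
Qed.

Lemma maxw_mono p q : (forall i, f i p <= f i q) -> maxw fe beta w p <= maxw fe beta w q.
Proof.
move=> hpq.
have hterm : forall i : 'I_n, w i * f i p <= maxw fe beta w q.
  move=> i; apply: (le_trans (y := w i * f i q)).
    by apply: ler_wpM2l; [case/andP: (hw i) | apply: hpq].
  by rewrite /maxw; apply: big_max_ge; rewrite mem_index_enum.
rewrite {1}/maxw; apply: (big_ind (fun x => x <= maxw fe beta w q)).
- case e: (enum 'I_n) => [|i0 r] /=.
    by have := size_enum_ord n; rewrite e => /= h0; exfalso; move: hn; rewrite -h0.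
  exact: hterm.
- by move=> x y hx hy; rewrite ge_max hx hy.
- by move=> i _; apply: hterm.
Qed.

Lemma cmax_mono p q : (forall i, f i p <= f i q) -> cm p <= cm q.
Proof.
move=> hpq; rewrite /cmax; apply: lerD; first exact: maxw_mono.
apply: ler_wpM2l; first exact: ltW.
by apply: ler_sum => i _; apply: hpq.
Qed.

Lemma is_path_take p m : is_path E p -> (0 < m)%N -> is_path E (take m p).
Proof.
case: p => [//|x t] /andP[hw' hu]; case: m => [//|m] _.
by rewrite /is_path take_uniq // andbT /= take_path.
Qed.

Lemma fprefix p m i : is_path E p -> (0 < m)%N -> f i (take m p) <= f i p.
Proof.
move=> hp hm; rewrite -{2}(cat_take_drop m p); apply: hmono.
  exact: is_path_take.
by rewrite cat_take_drop; case/andP: hp.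
Qed.

Lemma walk_rcons p u : walk E p -> E (last s p) u -> walk E (rcons p u).
Proof. by case: p => [//|x t] /= hp he; rewrite rcons_path hp he. Qed.

Lemma path_rcons p u : is_path E p -> E (last s p) u -> uniq (rcons p u) ->
  is_path E (rcons p u).
Proof. by move=> /andP[hp _] he hu; rewrite /is_path walk_rcons. Qed.

Lemma head_rcons p u : walk E p -> head s (rcons p u) = head s p.
Proof. by case: p. Qed.

Definition goodT (t : tuple_t R V) : Prop :=
  [/\ t.1.1 = cm t.2, t.1.2 = last s t.2, is_path E t.2 & head s t.2 = s].

Definition cov (L : seq (tuple_t R V)) x F :=
  exists2 t, t \in L & last s t.2 = x /\ le_f t.2 F.

Local Notation rlx L P u := (relax fe beta w rho s L P u).

Lemma relax_mem L P u t : t \in rlx L P u ->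
  t \in L \/ (t = (cm (rcons P u), u, rcons P u) /\ uniq (rcons P u)).
Proof.
rewrite /relax; case: ifP => hc; first by left.
rewrite mem_rcons in_cons => /orP[/eqP -> | ].
  by right; split=> //; move: hc => /negbT; rewrite negb_or negbK => /andP[].
by rewrite mem_filter => /andP[_ h]; left.
Qed.

Lemma relax_cov L P u x F : cov L x F -> cov (rlx L P u) x F.
Proof.
case=> t ht [hl hle]; rewrite /relax; case: ifP => hc; first by exists t.
case hk: ((last s t.2 == u) && dominates fe beta (rcons P u) t.2).
- move/andP: hk => [/eqP hu /andP[/forallP hd _]].
  exists (cm (rcons P u), u, rcons P u); first by rewrite mem_rcons mem_head.
  split; first by rewrite /= last_rcons -hl hu.
  by move=> i; apply: le_trans (hd i) (hle i).
- by exists t => //; rewrite mem_rcons in_cons mem_filter hk ht orbT.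
Qed.

Lemma relax_cov_new L P u : uniq (rcons P u) ->
  cov (rlx L P u) u (fun i => f i (rcons P u)).
Proof.
move=> hu; rewrite /relax; case: ifP => hc.
- move: hc; rewrite hu /= orbF => /hasP[t ht /andP[/eqP hl /andP[/forallP hd _]]].
  by exists t.
- exists (cm (rcons P u), u, rcons P u); first by rewrite mem_rcons mem_head.
  by split; [rewrite /= last_rcons | move=> i].
Qed.

Lemma foldl_inv (Pr : seq (tuple_t R V) -> Prop) P ns L0 : Pr L0 ->
  (forall L u, u \in ns -> Pr L -> Pr (rlx L P u)) ->
  Pr (foldl (fun L' u => rlx L' P u) L0 ns).
Proof.
elim: ns L0 => [//|a ns IH] L0 h0 hs; apply: IH.
  by apply: hs => //; rewrite mem_head.
by move=> L u hu; apply: hs; rewrite in_cons hu orbT.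
Qed.

Lemma foldl_cov_new P ns L0 u : u \in ns -> uniq (rcons P u) ->
  cov (foldl (fun L' u => rlx L' P u) L0 ns) u (fun i => f i (rcons P u)).
Proof.
elim: ns L0 => [//|a ns IH] L0; rewrite in_cons => /orP[/eqP -> | hu] hun.
- apply: (foldl_inv (fun L => cov L a (fun i => f i (rcons P a))) P ns (rlx L0 P a))
    => [|L v _]; first exact: relax_cov_new.
  exact: relax_cov.
- exact: IH.
Qed.

Definition covered (H : seq (seq V)) L x F :=
  (exists2 h, h \in H & last s h = x /\ le_f h F) \/ cov L x F.

Definition Inv H L : Prop :=
 [/\ forall t, t \in L -> goodT t,
     forall h, h \in H -> [/\ is_path E h, head s h = s & last s h != g],
     forall h u, h \in H -> E (last s h) u -> uniq (rcons h u) ->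
        covered H L u (fun i => f i (rcons h u)),
     forall p k, (p \in H \/ exists2 t, t \in L & t.2 = p) -> (0 < k < size p)%N ->
        take k p \in H
   & covered H L s (fun i => f i [:: s])].

Lemma expand_inv H L c v P ns :
  (c, v, P) \in L -> v != g -> perm_eq ns [seq u <- enum V | E v u] ->
  is_path E P -> head s P = s -> last s P = v ->
  (forall t, t \in rem (c, v, P) L -> goodT t) ->
  (forall h, h \in H -> [/\ is_path E h, head s h = s & last s h != g]) ->
  (forall h u, h \in H -> E (last s h) u -> uniq (rcons h u) ->
     covered H L u (fun i => f i (rcons h u))) ->
  (forall p k, (p \in H \/ exists2 t, t \in L & t.2 = p) -> (0 < k < size p)%N ->
     take k p \in H) ->
  covered H L s (fun i => f i [:: s]) ->
  Inv (P :: H) (foldl (fun L' u => rlx L' P u) (rem (c, v, P) L) ns).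
Proof.
move=> hin hvg hns hP hhd hlast hgood h2 h3 h4 h5.
set L' := foldl _ _ _.
have memns : forall u, (u \in ns) = E v u.
  by move=> u; rewrite (perm_mem hns) mem_filter mem_enum andbT.
have hcov : forall x F, covered H L x F -> covered (P :: H) L' x F.
  move=> x F [[h hh hx] | [t ht [hx hle]]].
    by left; exists h => //; rewrite in_cons hh orbT.
  case: (eqVneq t (c, v, P)) => [et | ne].
    by left; exists P; [rewrite mem_head | rewrite et in hx hle].
  right; apply: (foldl_inv (fun L => cov L x F)) => [|L0 u _]; last exact: relax_cov.
  by exists t => //; apply: rem_mem.
have hL' : forall t, t \in L' -> t \in rem (c, v, P) L \/
    exists u, [/\ t = (cm (rcons P u), u, rcons P u), uniq (rcons P u) & E v u].
  apply: (foldl_inv (fun L0 => forall t, t \in L0 -> _)); first by move=> t ->; left.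
  move=> L0 u hu IH t /relax_mem [/IH // | [-> hun]]; right; exists u; split=> //.
  by rewrite -memns.
split.
- move=> t /hL' [hr | [u [-> hun he]]]; first exact: hgood.
  split=> //; first by rewrite [_.1.2]/= [_.2]/= last_rcons.
    by apply: path_rcons => //; rewrite hlast.
  by rewrite head_rcons //; case/andP: hP.
- move=> h; rewrite in_cons => /orP[/eqP -> | /h2 //].
  by split=> //; rewrite hlast.
- move=> h u; rewrite in_cons => /orP[/eqP -> | hh] he hun.
    by right; apply: foldl_cov_new => //; rewrite memns -hlast.
  by apply: hcov; apply: h3.
- move=> p k hp hk.
  have hPin : forall k, (0 < k < size P)%N -> take k P \in P :: H.
    move=> k' hk'; rewrite in_cons; apply/orP; right; apply: h4 hk'.
    by right; exists (c, v, P).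
  case: hp => [| [t ht htp]].
    rewrite in_cons => /orP[/eqP ep | hh].
      by rewrite ep; apply: hPin; rewrite -ep.
    by rewrite in_cons; apply/orP; right; apply: h4 hk; left.
  case: (hL' t ht) => [hr | [u [et _ _]]].
    rewrite in_cons; apply/orP; right; apply: h4 hk; right; exists t => //.
    exact: mem_rem hr.
  have e2 : t.2 = rcons P u by rewrite et.
  move: hk; rewrite -htp e2 size_rcons ltnS => /andP[hk0 hk].
  case: (ltngtP k (size P)) hk => [hlt | hgt | ->] hk'.
  - rewrite -cats1 takel_cat; last exact: ltnW.
    by apply: hPin; rewrite hk0 hlt.
  - by move: hk'.
  - by rewrite -cats1 take_size_cat ?mem_head.
- exact: hcov.
Qed.

Lemma walk_size p : walk E p -> (0 < size p)%N.
Proof. by case: p. Qed.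

Lemma take1_head p : walk E p -> head s p = s -> take 1 p = [:: s].
Proof. by case: p => [//|x t] _ /= ->; rewrite take0. Qed.

Lemma nth0_head p : walk E p -> head s p = s -> nth s p 0 = s.
Proof. by case: p => [//|x t] _ /= ->. Qed.

Lemma walk_edge p j : walk E p -> (j.+1 < size p)%N -> E (nth s p j) (nth s p j.+1).
Proof. case: p => [//|x t] /= /(pathP s) hp hj; exact: hp. Qed.

Lemma key H L Q : Inv H L -> sg_path E s g Q -> exists2 t, t \in L & t.1.1 <= cm Q.
Proof.
case=> h1 h2 h3 h4 h5 /and3P[hQ /eqP hQh /eqP hQl].
case: (boolP (has (fun t => t.1.1 <= cm Q) L)) => [/hasP[t ht hle] | hno].
  by exists t.
have hc : forall t, t \in L -> cm Q < t.1.1.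
  move=> t ht; rewrite ltNge; apply: contra hno => hle; apply/hasP; by exists t.
have fQ : forall m i, (0 < m)%N -> f i (take m Q) <= f i Q.
  by move=> m i hm; apply: fprefix.
have inH : forall x F, covered H L x F -> (forall i, F i <= f i Q) ->
    exists2 h, h \in H & last s h = x /\ le_f h F.
  move=> x F [hh | [t ht [hx hle]]] hF; first exact: hh.
  exfalso; have := hc t ht; case: (h1 t ht) => -> _ _ _.
  have hcm : cm t.2 <= cm Q.
    by apply: cmax_mono => i; apply: le_trans (hle i) (hF i).
  by move=> hlt; move: (le_lt_trans hcm hlt); rewrite ltxx.
have hQsz : (0 < size Q)%N by apply: walk_size; case/andP: hQ.
have claim : forall j, (j < size Q)%N -> exists2 h, h \in H &
    last s h = nth s Q j /\ le_f h (fun i => f i (take j.+1 Q)).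
  elim=> [|j IH] hj.
  - have eQ : take 1 Q = [:: s].
      by apply: take1_head => //; case/andP: hQ.
    have nth0 : nth s Q 0 = s.
      by apply: nth0_head => //; case/andP: hQ.
    rewrite nth0 eQ; apply: inH => // i; rewrite -eQ; exact: fQ.
  - have hj' : (j < size Q)%N by apply: ltnW.
    case: (IH hj') => h hh [hl hle].
    set u := nth s Q j.+1.
    have he : E (nth s Q j) u.
      by rewrite /u; apply: walk_edge => //; case/andP: hQ.
    have eT : take j.+2 Q = rcons (take j.+1 Q) u := take_nth s hj.
    have eT1 : take j.+1 Q = rcons (take j Q) (nth s Q j) := take_nth s hj'.
    have hpj : is_path E (take j.+1 Q) by apply: is_path_take.
    have hpj2 : is_path E (take j.+2 Q) by apply: is_path_take.
    case: (h2 h hh) => hph _ _.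
    have hstep : forall i, f i (take j.+1 Q) <= f i (take j.+2 Q).
      move=> i; rewrite -{1}(take_takel (i:=j.+1) (j:=j.+2) Q) //.
      exact: fprefix.
    have fQ2 : forall i, f i (take j.+2 Q) <= f i Q by move=> i; apply: fQ.
    case: (boolP (uniq (rcons h u))) => hun.
    + have hF : forall i, f i (rcons h u) <= f i (take j.+2 Q).
        move=> i; rewrite eT -!cats1; apply: hdom.
        * exact: hpj.
        * exact: hph.
        * by rewrite eT1 last_rcons hl.
        * by rewrite cats1 -eT; case/andP: hpj2.
        * by rewrite cats1; apply: walk_rcons; [case/andP: hph | rewrite hl].
        * exact: hle.
      have hc3 := h3 h u hh (eq_ind_r (fun y => E y u) he hl) hun.
      case: (inH _ _ hc3) => [i|h' hh' [hl' hle']].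
        exact: le_trans (hF i) (fQ2 i).
      exists h' => //; split => // i; exact: le_trans (hle' i) (hF i).
    + move: hun; rewrite rcons_uniq; case/andP: (hph) => _ ->; rewrite andbT negbK => hu.
      set k := index u h.
      have hk : (k < size h)%N by rewrite index_mem.
      have hlk : nth s h k = u := nth_index s hu.
      have hQu : uniq Q by case/andP: hQ.
      have hk1 : (k.+1 < size h)%N.
        rewrite ltn_neqAle hk andbT; apply/eqP => ek.
        have : nth s Q j == nth s Q j.+1 = (j == j.+1) by apply: nth_uniq.
        rewrite -hl -nth_last -ek /= hlk -/u eqxx => /esym.
        by rewrite eqn_leq ltnn andbF.
      have hin : take k.+1 h \in H by apply: h4; [left | rewrite hk1].
      exists (take k.+1 h) => //; split.
        by rewrite (take_nth s hk) last_rcons.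
      move=> i; apply: le_trans (fprefix _ _ i hph _) _ => //.
      exact: le_trans (hle i) (hstep i).
have hlast : ((size Q).-1 < size Q)%N by rewrite ltn_predL.
have [h hh [hl _]] := claim (size Q).-1 hlast.
case: (h2 h hh) => _ _; rewrite hl nth_last hQl.
by rewrite eqxx.
Qed.

Local Notation K := (#|V|.+1).

Definition mu (L : seq (tuple_t R V)) : nat :=
  (\sum_(t <- L) K ^ (K - size t.2))%N.

Lemma mu_filter (a : pred (tuple_t R V)) L : (mu (filter a L) <= mu L)%N.
Proof.
rewrite /mu big_filter [X in (X <= _)%N]big_mkcond.
by apply: leq_sum => i _; case: ifP.
Qed.

Lemma mu_relax L P u : (mu (rlx L P u) <= mu L + K ^ (K - (size P).+1))%N.
Proof.
rewrite /relax; case: ifP => _; first exact: leq_addr.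
rewrite /mu -cats1 big_cat big_seq1 [(_, _, _).2]/= size_rcons.
by apply: leq_add => //; apply: mu_filter.
Qed.

Lemma mu_foldl P ns L0 :
  (mu (foldl (fun L' u => rlx L' P u) L0 ns) <= mu L0 + size ns * K ^ (K - (size P).+1))%N.
Proof.
elim: ns L0 => [|a ns IH] L0; first by rewrite addn0.
apply: leq_trans (IH _) _; rewrite mulSn addnA leq_add2r.
exact: mu_relax.
Qed.

Lemma acc_open m L : (mu L < m)%N -> (forall t, t \in L -> uniq t.2) ->
  Acc (fun y x => step E fe beta w rho s g x y) (Open L).
Proof.
elim: m L => [//|m IH] L hm hu; constructor => y hst.
inversion hst; subst.
- by constructor => z hz; inversion hz.
- by constructor => z hz; inversion hz.
- apply: IH.
  + have hPu : uniq P by have := hu _ H0.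
    have hsz : (size P <= #|V|)%N by rewrite -(card_uniqP hPu) max_card.
    have hns : (size ns <= #|V|)%N.
      by rewrite (perm_size H3) size_filter cardE count_size.
    have eK : (K - size P = (K - (size P).+1).+1)%N.
      by rewrite subnS prednK // subn_gt0 ltnS.
    set X := (K ^ (K - (size P).+1))%N.
    have hX : (0 < X)%N by rewrite expn_gt0.
    have h1 := mu_foldl P ns (rem (c, v, P) L).
    have h2 : (size ns * X <= #|V| * X)%N by rewrite leq_mul2r hns orbT.
    have h3 : mu L = (X * K + mu (rem (c, v, P) L))%N.
      rewrite /mu (perm_big _ (perm_to_rem H0)) big_cons [(_, _, _).2]/= eK expnSr.
      by [].
    rewrite mulnS in h3.
    rewrite h3 in hm; rewrite mulnC in h2; move: h1 h2 hm hX.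
    set a := mu _; set b := mu _; set c1 := (size ns * X)%N; set d := (X * #|V|)%N.
    move=> h1 h2 hm hX; lia.
  + move=> t ht; apply: (foldl_inv (fun L0 => forall t, t \in L0 -> uniq t.2)) ht.
      by move=> t' /mem_rem; apply: hu.
    move=> L0 u _ hL0 t' /relax_mem [/hL0 // | [-> hun]].
    by [].
Qed.

Definition init_t : tuple_t R V := (0, s, [:: s]).

Definition RI (st : state R V) : Prop :=
  match st with
  | Open L => L = [:: init_t] \/ exists H, Inv H L
  | Ret P => sg_path E s g P /\ forall Q, sg_path E s g Q -> cm P <= cm Q
  | Fail => False
  end.

Lemma sg_single Q : s = g -> sg_path E s g Q -> Q = [:: s].
Proof.
move=> esg /and3P[/andP[hw' hu] /eqP hh /eqP hl]; move: hw' hu hh hl.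
case: Q => [//|x [|y t]] _ /=; first by move=> _ ->.
move=> /andP[hx _] ex hl; subst x; exfalso; move: hx; rewrite in_cons negb_or => /andP[hxy hxt].
have := mem_last y t; rewrite hl -esg in_cons (negbTE hxy) /=.
by rewrite (negbTE hxt).
Qed.

Lemma RI_step st st' : (exists Q, sg_path E s g Q) -> RI st ->
  step E fe beta w rho s g st st' -> RI st'.
Proof.
move=> [Q hQ] hRI hst; inversion hst; subst => /=.
- case: hRI => [//|[HH hI]].
  by have [t] := key _ _ _ hI hQ.
- case: hRI => [eL | [HH hI]].
  + move: H; rewrite eL mem_seq1 => /eqP [ec eg eP].
    split; first by rewrite eP /sg_path /is_path /= -eg eqxx.
    by move=> Q' hQ'; rewrite (sg_single _ (esym eg) hQ') eP.
  + case: (hI) => h1 _ _ _ _.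
    case: (h1 _ H) => [/= ec ev hP hh].
    split; first by rewrite /sg_path hP hh -ev !eqxx.
    move=> Q' hQ'; have [t ht hle] := key _ _ _ hI hQ'.
    by rewrite -ec; apply: le_trans (H0 t ht) hle.
- right.
  case: hRI => [eL | [HH hI]].
  + move: (H); rewrite eL mem_seq1 => /eqP [ec ev eP].
    exists [:: P]; subst L c v P.
    apply: expand_inv.
    * by rewrite mem_seq1.
    * exact/eqP.
    * exact: H2.
    * by [].  
    * by [].
    * by [].
    * by move=> t; rewrite /= eqxx.
    * by move=> h.
    * by move=> h u.
    * move=> p k [//|[t]]; rewrite mem_seq1 => /eqP -> <-.
      by case: k.
    * by right; exists init_t; [rewrite mem_seq1 | split => // i].
  + case: (hI) => h1 h2 h3 h4 h5.
    case: (h1 _ H) => [/= ec ev hP hh].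
    exists (P :: HH); apply: expand_inv.
    all: try exact: H.
    all: try exact: H2.
    all: try exact: hP.
    all: try exact: hh.
    all: try exact: h2.
    all: try exact: h3.
    all: try exact: h4.
    all: try exact: h5.
    * exact/eqP.
    * by rewrite ev.
    * by move=> t /mem_rem; apply: h1.
Qed.

Lemma exists_min (L : seq (tuple_t R V)) : L != [::] ->
  exists2 t, t \in L & forall t', t' \in L -> t.1.1 <= t'.1.1.
Proof.
elim: L => [//|a L IH] _.
case: (eqVneq L [::]) => [-> | /IH [t ht hmin]].
  by exists a => [|t']; rewrite ?mem_seq1 // => /eqP ->.
case: (leP a.1.1 t.1.1) => hat.
  exists a; first exact: mem_head.
  move=> t'; rewrite in_cons => /orP[/eqP -> // | /hmin]; exact: le_trans.
exists t; first by rewrite in_cons ht orbT.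
move=> t'; rewrite in_cons => /orP[/eqP -> | /hmin //]; exact: ltW.
Qed.

Lemma main_sec : (forall x y : V, connect E x y) ->
  Acc (fun y x => step E fe beta w rho s g x y) (init_state R s) /\
  (forall st, clos_refl_trans _ (step E fe beta w rho s g) (init_state R s) st ->
     (forall st', ~ step E fe beta w rho s g st st') ->
     exists P : seq V, st = Ret R P /\ sg_path E s g P /\
       (forall Q, sg_path E s g Q -> cmax fe beta w rho P <= cmax fe beta w rho Q)).
Proof.
move=> hconn.
have exQ : exists Q, sg_path E s g Q.
  case/connectP: (hconn s g) => p hp hl.
  move: hl; case: (shortenP hp) => p' hp' hu' _ hl.
  exists (s :: p'); apply/and3P; split.
  - by apply/andP; split.
  - by [].
  - by rewrite /= -hl.
split.
  apply: (acc_open (mu [:: init_t]).+1) => //.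
  by move=> t; rewrite mem_seq1 => /eqP ->.
move=> st hrt hstuck.
have hRI : RI st.
  have : forall x y, clos_refl_trans _ (step E fe beta w rho s g) x y -> RI x -> RI y.
    move=> x y; elim => [a b hab | a | a b c _ IH1 _ IH2] //.
      by move=> ha; exact: (RI_step a b exQ ha hab).
    by move=> /IH1 /IH2.
  move=> hcl; apply: (hcl _ _ hrt); rewrite /RI /init_state; by left.
case: st hrt hstuck hRI => [L | P | ] _ hstuck hRI.
- exfalso.
  have hL : L != [::].
    case: hRI => [-> // | [HH hI]].
    by case: exQ => Q hQ; have [t ht _] := key _ _ _ hI hQ; apply/eqP => eL; rewrite eL in ht.
  have [[[c v] P] ht hmin] := exists_min _ hL.
  case: (eqVneq v g) => hvg.
    by apply: (hstuck (Ret R P)); apply: step_goal ht hmin hvg.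
  apply: (hstuck _); apply: (@step_expand R V E n fe beta w rho s g L c v P
     [seq u <- enum V | E v u] ht hmin).
    exact/eqP.
  exact: perm_refl.
- by exists P.
- by [].
Qed.

End Aux.

Theorem mainTheorem3 (R : realFieldType) (V : finType) (E : rel V) (n : nat)
  (fe : 'I_n -> V -> V -> R) (beta : seq R -> R)
  (w : 'I_n -> R) (rho : R) (s g : V) :
  (forall x y : V, connect E x y) ->
  (forall (i : 'I_n) (x y : V), E x y -> 0 <= fe i x y) ->
  (* monotonicity of beta: extending a path never decreases any f_i *)
  (forall (i : 'I_n) (p q : seq V), is_path E p -> walk E (p ++ q) ->
     fcost fe beta i p <= fcost fe beta i (p ++ q)) ->
  (* monotonicity of beta: domination is preserved by common continuations *)
  (forall (i : 'I_n) (p p' q : seq V), is_path E p -> is_path E p' ->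
     last s p = last s p' -> walk E (p ++ q) -> walk E (p' ++ q) ->
     fcost fe beta i p' <= fcost fe beta i p ->
     fcost fe beta i (p' ++ q) <= fcost fe beta i (p ++ q)) ->
  (0 < n)%N ->
  (forall i : 'I_n, 0 <= w i <= 1) ->
  0 < rho ->
  (* the algorithm terminates on every run ... *)
  Acc (fun y x => step E fe beta w rho s g x y) (init_state R s) /\
  (* ... and every run returns an optimal s-g path *)
  (forall st, clos_refl_trans _ (step E fe beta w rho s g) (init_state R s) st ->
     (forall st', ~ step E fe beta w rho s g st st') ->
     exists P : seq V, st = Ret R P /\ sg_path E s g P /\
       (forall Q, sg_path E s g Q -> cmax fe beta w rho P <= cmax fe beta w rho Q)).
Proof.
move=> hconn _ hm hd hn hw hr.
exact: (@main_sec R V E n fe beta w rho s g hm hd hn hw hr hconn).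
Qed.
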